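(* Let $n_1,n_2$ be distinct odd primes with $\gcd(n_1-1,n_2-1)=6$, $n=n_1n_2$, and let $D_0,\dots,D_5$ be the Whiteman generalized cyclotomic classes of order 6 modulo $n$ (see context). Let $q$ be a prime power with $\gcd(q,n)=1$, let $m$ be the order of $q$ modulo $n$, $\alpha$ a primitive element of $\mathrm{GF}(q^m)$ and $\beta=\alpha^{(q^m-1)/n}$. Let $N_1=\{n_1,\dots,(n_2-1)n_1\}$ and $S(x)=\sum_{i\in N_1\cup D_0\cup D_1\cup D_2}x^i$, $T(x)=\sum_{i\in N_1\cup D_1\cup D_2\cup D_3}x^i$, $M(x)=\sum_{i\in N_1\cup D_2\cup D_3\cup D_4}x^i$ in $\mathrm{GF}(q)[x]$. Then: (I) if $q\bmod n\in D_1\cup D_3\cup D_5$, then $S(\beta),T(\beta),M(\beta)\notin\{-1,0\}$; (II) if $q\bmod n\in D_0$, then $S(\beta)^q=S(\beta)$, $T(\beta)^q=T(\beta)$, $M(\beta)^q=M(\beta)$; (III) if $q\bmod n\in D_2\cup D_4$, then $S(\beta)^{q^3}=S(\beta)$, $T(\beta)^{q^3}=T(\beta)$, $M(\beta)^{q^3}=M(\beta)$.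
   Context: Let $e=(n_1-1)(n_2-1)/6$, $g$ a common primitive root of $n_1$ and $n_2$, $u$ an integer with $u\equiv g\pmod{n_1}$, $u\equiv 1\pmod{n_2}$, and $D_i=\{g^su^i\bmod n: s=0,\dots,e-1\}$ for $i=0,\dots,5$; these partition $\mathbb{Z}_n^*$. *)

(* Defs.v *)
From mathcomp Require Import all_boot all_order all_algebra all_field.
Set Implicit Arguments. Unset Strict Implicit. Unset Printing Implicit Defensive.
Import GRing.Theory.

Definition is_primroot (g p : nat) : Prop :=
  (g ^ p.-1 = 1 %[mod p]) /\ (forall k, 0 < k < p.-1 -> g ^ k != 1 %[mod p]).

Definition is_ord_mod (q n m : nat) : Prop :=
  0 < m /\ (q ^ m = 1 %[mod n]) /\ (forall k, 0 < k < m -> q ^ k != 1 %[mod n]).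

Definition wh_e (n1 n2 : nat) : nat := ((n1.-1) * (n2.-1)) %/ 6.

Definition whD (n1 n2 g u i : nat) : seq nat :=
  [seq (g ^ s * u ^ i) %% (n1 * n2) | s <- iota 0 (wh_e n1 n2)].

Definition whN1 (n1 n2 : nat) : seq nat := [seq k * n1 | k <- iota 1 n2.-1].

(* sum_{i in A, 0 <= i < n} beta^i, i.e. the evaluation at beta of the
   0/1-coefficient polynomial sum_{i in A} x^i (A a subset of {0..n-1}). *)
Definition evsum (F : fieldType) (beta : F) (n : nat) (A : pred nat) : F :=
  \sum_(i < n | A i) beta ^+ i.

(* Main.v *)
Require Import Defs.
From mathcomp Require Import all_boot all_order all_algebra all_field.
From mathcomp Require Import zify ring.
Import GRing.Theory.
Set Implicit Arguments. Unset Strict Implicit.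

Local Close Scope ring_scope.

Lemma modMeq a a' b b' d : a = a' %[mod d] -> b = b' %[mod d] -> a * b = a' * b' %[mod d].
Proof. by move=> Ha Hb; rewrite -modnMm Ha Hb modnMm. Qed.

Lemma modXeq k a a' d : a = a' %[mod d] -> a ^ k = a' ^ k %[mod d].
Proof. by move=> Ha; rewrite -modnXm Ha modnXm. Qed.

Lemma mod_dvdeq a b d d' : d' %| d -> a = b %[mod d] -> a = b %[mod d'].
Proof. by move=> Hd H; rewrite -(modn_dvdm a Hd) H modn_dvdm. Qed.

Lemma pow_red g d M a : g ^ d = 1 %[mod M] -> g ^ a = g ^ (a %% d) %[mod M].
Proof.
move=> H; rewrite {1}(divn_eq a d) (mulnC (a %/ d)) expnD expnM.
by rewrite -modnMm (modXeq (a %/ d) H) exp1n modnMm mul1n.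
Qed.

Lemma primroot_coprime g p : prime p -> is_primroot g p -> coprime g p.
Proof.
move=> pp [H1 _]; rewrite coprime_sym prime_coprime //; apply/negP=> dg.
move: H1; have p1 := prime_gt1 pp.
rewrite (modn_small p1) -modnXm (eqP dg) exp0n; last by case: p pp p1 {dg}=> [|[|p]].
by rewrite mod0n.
Qed.

Lemma primroot_exp1 g p d : prime p -> is_primroot g p -> g ^ d = 1 %[mod p] -> p.-1 %| d.
Proof.
move=> pp [H1 H2] Hd.
have := pow_red d H1; rewrite Hd => /esym Hr.
have [r0|rpos] := posnP (d %% p.-1); first by rewrite /dvdn r0.
have p1 := prime_gt1 pp.
have rlt : d %% p.-1 < p.-1 by rewrite ltn_mod; lia.
by move: (H2 (d %% p.-1)); rewrite rpos rlt Hr eqxx => /(_ isT).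
Qed.

Lemma primroot_eq g p x y : prime p -> is_primroot g p ->
  g ^ x = g ^ y %[mod p] -> x = y %[mod p.-1].
Proof.
move=> pp hg.
wlog le_yx : x y / y <= x.
  by move=> W; have [?|/ltnW ?] := leqP y x; [apply: W | move=> /esym H; apply/esym/W].
move=> H; apply/eqP; rewrite eqn_mod_dvd //.
apply: (primroot_exp1 pp hg).
have cg := primroot_coprime pp hg.
have gpos : 0 < g ^ (x - y).
  rewrite expn_gt0; case: g {H} cg hg => [|g] // ; rewrite /coprime gcd0n => /eqP p1.
  by move: (prime_gt1 pp); rewrite p1.
apply/eqP; rewrite eqn_mod_dvd //.
move: H => /eqP; rewrite -(subnKC le_yx) expnD -{2}(muln1 (g ^ y)) eqn_mod_dvd; last first.
  by rewrite leq_mul2l gpos orbT.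
rewrite -mulnBr Gauss_dvdr; first by rewrite addKn.
by rewrite coprime_sym coprimeXl.
Qed.

Lemma primroot_eqR g p x y : prime p -> is_primroot g p ->
  x = y %[mod p.-1] -> g ^ x = g ^ y %[mod p].
Proof.
move=> pp [H1 _] H; by rewrite (pow_red x H1) H -(pow_red y H1).
Qed.

Lemma modMl c b b' d : b = b' %[mod d] -> c * b = c * b' %[mod d].
Proof. by move=> H; rewrite -modnMmr H modnMmr. Qed.
Arguments modMl c [b b' d].

Local Close Scope ring_scope.

Record hyp (n1 n2 g u : nat) : Prop := Hyp {
  pn1 : prime n1; pn2 : prime n2; neq12 : n1 != n2; gcd6 : gcdn n1.-1 n2.-1 = 6;
  pr1 : is_primroot g n1; pr2 : is_primroot g n2;
  uu1 : u = g %[mod n1]; uu2 : u = 1 %[mod n2] }.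


Lemma cop12 n1 n2 g u : hyp n1 n2 g u -> coprime n1 n2.
Proof.
case=> p1 p2 ne *; rewrite prime_coprime // dvdn_prime2 //.
Qed.

Lemma d6_1 n1 n2 g u : hyp n1 n2 g u -> 6 %| n1.-1.
Proof. by case=> _ _ _ h *; rewrite -h dvdn_gcdl. Qed.
Lemma d6_2 n1 n2 g u : hyp n1 n2 g u -> 6 %| n2.-1.
Proof. by case=> _ _ _ h *; rewrite -h dvdn_gcdr. Qed.

Lemma e_lcm n1 n2 g u : hyp n1 n2 g u -> wh_e n1 n2 = lcmn n1.-1 n2.-1.
Proof. by case=> _ _ _ h *; rewrite /wh_e /lcmn h. Qed.

Lemma mod12 n1 n2 g u x y : hyp n1 n2 g u ->
  (x = y %[mod n1 * n2]) <-> (x = y %[mod n1] /\ x = y %[mod n2]).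
Proof.
move=> H; split.
  by move=> E; split; apply: (mod_dvdeq _ E); [apply: dvdn_mulr | apply: dvdn_mull].
by case=> /eqP E1 /eqP E2; apply/eqP; rewrite chinese_remainder ?E1 ?E2 // (cop12 H).
Qed.

Lemma ge1 n1 n2 g u : hyp n1 n2 g u -> g ^ wh_e n1 n2 = 1 %[mod n1 * n2].
Proof.
move=> H; apply/(mod12 _ _ H); rewrite (e_lcm H) -(expn0 g); split.
  apply: primroot_eqR (pn1 H) (pr1 H) _.
  by rewrite mod0n; apply/eqP; exact: dvdn_lcml.
apply: primroot_eqR (pn2 H) (pr2 H) _.
by rewrite mod0n; apply/eqP; exact: dvdn_lcmr.
Qed.

Lemma key n1 n2 g u s t i j : hyp n1 n2 g u ->
  g ^ s * u ^ i = g ^ t * u ^ j %[mod n1 * n2] ->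
  s + i = t + j %[mod n1.-1] /\ s = t %[mod n2.-1].
Proof.
move=> H /(mod12 _ _ H) [E1 E2]; split.
  apply: primroot_eq (pn1 H) (pr1 H) _.
  rewrite !expnD -(modMl (g ^ s) (modXeq i (uu1 H))) -(modMl (g ^ t) (modXeq j (uu1 H))).
  by [].
apply: primroot_eq (pn2 H) (pr2 H) _.
have A : forall a k, a * u ^ k = a %[mod n2].
  by move=> a k; rewrite (modMl a (modXeq k (uu2 H))) exp1n muln1.
by rewrite -(A (g ^ s) i) E2 A.
Qed.

Lemma cls n1 n2 g u s t i j : hyp n1 n2 g u ->
  g ^ s * u ^ i = g ^ t * u ^ j %[mod n1 * n2] -> i = j %[mod 6].
Proof.
move=> H /(key H) [E1 E2].
have {E1}E1 := mod_dvdeq (d6_1 H) E1; have {E2}E2 := mod_dvdeq (d6_2 H) E2.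
apply/eqP; rewrite -(eqn_modDl s); apply/eqP.
by rewrite E1 -modnDml -E2 modnDml.
Qed.

Lemma modlcm x y a b : x = y %[mod a] -> x = y %[mod b] -> x = y %[mod lcmn a b].
Proof.
wlog le : x y / y <= x.
  move=> W; have [?|/ltnW ?] := leqP y x; first by apply: W.
  by move=> /esym h1 /esym h2; apply/esym/W.
move=> /eqP h1 /eqP h2; apply/eqP; move: h1 h2; rewrite !eqn_mod_dvd //.
by rewrite dvdn_lcm => -> ->.
Qed.

Lemma inj_cls n1 n2 g u s t i : hyp n1 n2 g u ->
  s < wh_e n1 n2 -> t < wh_e n1 n2 ->
  g ^ s * u ^ i = g ^ t * u ^ i %[mod n1 * n2] -> s = t.
Proof.
move=> H hs ht /(key H) [/eqP E1 E2].
rewrite eqn_modDr in E1.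
have := modlcm (eqP E1) E2; rewrite -(e_lcm H) !modn_small //.
Qed.

Lemma memD n1 n2 g u i x :
  reflect (exists2 s, s < wh_e n1 n2 & x = (g ^ s * u ^ i) %% (n1 * n2))
          (x \in whD n1 n2 g u i).
Proof.
apply: (iffP mapP) => [[s]|[s hs ->]].
  by rewrite mem_iota add0n => hs ->; exists s.
by exists s; rewrite // mem_iota add0n.
Qed.

Lemma n_gt1 n1 n2 g u : hyp n1 n2 g u -> 1 < n1 * n2.
Proof.
case=> p1 p2 *; have := prime_gt1 p1; have := prime_gt1 p2; nia.
Qed.

Lemma g_cop n1 n2 g u : hyp n1 n2 g u -> coprime g (n1 * n2).
Proof.
move=> H; rewrite coprimeMr (primroot_coprime (pn1 H) (pr1 H)).
exact: (primroot_coprime (pn2 H) (pr2 H)).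
Qed.

Lemma u_cop n1 n2 g u : hyp n1 n2 g u -> coprime u (n1 * n2).
Proof.
move=> H; rewrite coprimeMr -coprime_modl (uu1 H) coprime_modl.
rewrite (primroot_coprime (pn1 H) (pr1 H)) /= -coprime_modl (uu2 H) coprime_modl.
exact: coprime1n.
Qed.

Lemma D_uniq n1 n2 g u i : hyp n1 n2 g u -> uniq (whD n1 n2 g u i).
Proof.
move=> H; rewrite map_inj_in_uniq ?iota_uniq // => s t.
rewrite !mem_iota !add0n => hs ht E; exact: (inj_cls H hs ht E).

Qed.

Lemma D_unit n1 n2 g u i x : hyp n1 n2 g u -> x \in whD n1 n2 g u i ->
  x < n1 * n2 /\ coprime x (n1 * n2).
Proof.
move=> H /memD [s _ ->]; split; first by rewrite ltn_mod; have := n_gt1 H; lia.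
rewrite coprime_modl coprimeMl coprimeXl ?(g_cop H) //.
exact/coprimeXl/(u_cop H).
Qed.

Lemma e_gt0 n1 n2 g u : hyp n1 n2 g u -> 0 < wh_e n1 n2.
Proof.
move=> H; rewrite (e_lcm H) lcmn_gt0; have := prime_gt1 (pn1 H); have := prime_gt1 (pn2 H).
lia.
Qed.

Lemma D_mul n1 n2 g u i x Q w : hyp n1 n2 g u -> x \in whD n1 n2 g u i ->
  Q = g ^ w %[mod n1 * n2] -> (x * Q) %% (n1 * n2) \in whD n1 n2 g u i.
Proof.
move=> H /memD [s _ ->] EQ; apply/memD.
exists ((s + w) %% wh_e n1 n2).
  by rewrite ltn_mod (e_gt0 H).
rewrite modnMml (modMl _ EQ).
by rewrite mulnAC -expnD -modnMml (pow_red _ (ge1 H)) modnMml.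
Qed.

Lemma D_cls n1 n2 g u i x : hyp n1 n2 g u -> x \in whD n1 n2 g u i ->
  exists s, x = g ^ s * u ^ i %[mod n1 * n2].
Proof. by move=> H /memD [s _ ->]; exists s; rewrite modn_mod. Qed.

Lemma u6 n1 n2 g u : hyp n1 n2 g u -> exists c, u ^ 6 = g ^ c %[mod n1 * n2].
Proof.
move=> H; have d1 := d6_1 H; have d2 := d6_2 H.
set a := n1.-1 %/ 6; set b := n2.-1 %/ 6.
have ea : n1.-1 = 6 * a by rewrite /a mulnC divnK.
have eb : n2.-1 = 6 * b by rewrite /b mulnC divnK.
have cab : coprime a b.
  have := gcd6 H; rewrite ea eb -muln_gcdr => /eqP; rewrite -{2}(muln1 6) eqn_pmul2l //.
have ca := chinese_modl cab 1 0; have cb := chinese_modr cab 1 0.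
exists (6 * chinese a b 1 0); apply/(mod12 _ _ H); split.
  rewrite (modXeq 6 (uu1 H)); apply: primroot_eqR (pn1 H) (pr1 H) _.
  by rewrite ea -[in LHS](muln1 6) -!muln_modr ca.
rewrite (modXeq 6 (uu2 H)) exp1n [in LHS](_ : 1 = g ^ 0) //; apply: primroot_eqR (pn2 H) (pr2 H) _.
by rewrite eb -muln_modr cb !mod0n.
Qed.

Lemma memN1 n1 n2 x : prime n1 -> 
  (x \in whN1 n1 n2) = [&& 0 < x, x < n1 * n2 & n1 %| x].
Proof.
move=> p1; have n1p := prime_gt0 p1.
apply/mapP/and3P => [[k]|[x0 xn /dvdnP [k ek]]].
  rewrite mem_iota => /andP [k1 k2] ->; split; rewrite ?dvdn_mull //.
    by rewrite muln_gt0 n1p; lia.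
  rewrite mulnC ltn_pmul2l //; lia.
exists k => //; rewrite mem_iota; apply/andP; split.
  by move: x0; rewrite ek; case: k {ek}.
move: xn; rewrite ek mulnC ltn_pmul2l //; lia.
Qed.

Lemma N1_uniq n1 n2 : prime n1 -> uniq (whN1 n1 n2).
Proof.
move=> p1; rewrite map_inj_uniq ?iota_uniq // => a b /eqP.
by rewrite eqn_pmul2r ?prime_gt0 // => /eqP.
Qed.

Lemma cancel_mod x y Q n : coprime Q n -> x * Q = y * Q %[mod n] -> x = y %[mod n].
Proof.
move=> cQ; wlog le : x y / y <= x.
  move=> W; have [?|/ltnW ?] := leqP y x; first by apply: W.
  by move=> /esym h1; apply/esym/W.
move=> /eqP; rewrite !eqn_mod_dvd ?leq_mul2r ?le ?orbT // -mulnBl Gauss_dvdl.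
  by move=> h; apply/eqP; rewrite eqn_mod_dvd.
by rewrite coprime_sym.
Qed.

Lemma N1_mul n1 n2 g u x Q : hyp n1 n2 g u -> x \in whN1 n1 n2 ->
  coprime Q (n1 * n2) -> (x * Q) %% (n1 * n2) \in whN1 n1 n2.
Proof.
move=> H; rewrite !(memN1 _ _ (pn1 H)) => /and3P [x0 xn /dvdnP [k ek]] cQ.
have n1p := prime_gt0 (pn1 H); have n2p := prime_gt0 (pn2 H).
rewrite ltn_pmod ?muln_gt0 ?n1p ?n2p //= ek mulnAC [n1 * n2]mulnC -muln_modl dvdn_mull // andbT.
rewrite muln_gt0 n1p andbT lt0n; apply/negP => /eqP/eqP.
rewrite -/(dvdn _ _) Gauss_dvdl; last by rewrite coprime_sym; move: cQ; rewrite coprimeMr => /andP [].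
apply/negP; rewrite -prime_coprime ?(pn2 H) // prime_coprime ?(pn2 H) //.
apply/negP => /dvdn_leq; move: x0 xn; rewrite ek; case: k {ek} => // k _.
by rewrite mulnC ltn_pmul2l //; lia.
Qed.

Lemma N1_notcop n1 n2 x : prime n1 -> x \in whN1 n1 n2 -> ~~ coprime x (n1 * n2).
Proof.
move=> p1; rewrite memN1 // => /and3P [_ _ d]; rewrite coprimeMr coprime_sym prime_coprime //.
by rewrite d.
Qed.

Local Open Scope ring_scope.

Lemma evsum_seq (F : fieldType) (b : F) n (P : pred nat) (s : seq nat) :
  uniq s -> (forall x, (x \in s) = (x < n)%N && P x) ->
  evsum b n P = \sum_(x <- s) b ^+ x.
Proof.
move=> us hs; rewrite /evsum -(big_mkord P (fun i => b ^+ i)) -big_filter.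
apply: perm_big; apply: uniq_perm; rewrite ?filter_uniq ?iota_uniq //.
by move=> x; rewrite mem_filter mem_iota add0n hs andbC subn0.
Qed.

Lemma frob (F : fieldType) p j (b : F) (s : seq nat) : p \in [pchar F] ->
  (\sum_(x <- s) b ^+ x) ^+ (p ^ j) = \sum_(x <- s) b ^+ (x * p ^ j).
Proof.
move=> cp; have pp := pcharf_prime cp.
have pn : [pchar F].-nat (p ^ j)%N by rewrite pnatX pnatE ?cp.
elim: s => [|x s IH]; first by rewrite !big_nil expr0n expn_eq0 eqn0Ngt prime_gt0.
by rewrite !big_cons exprDn_pchar // IH exprM.
Qed.

Lemma modsum (F : fieldType) (b : F) n Q (s : seq nat) : b ^+ n = 1 ->
  \sum_(x <- s) b ^+ (x * Q) = \sum_(x <- map (fun x => (x * Q) %% n)%N s) b ^+ x.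
Proof.
by move=> bn; rewrite big_map; apply: eq_bigr => x _; rewrite (expr_mod _ bn).
Qed.

Lemma geo (F : fieldType) (z : F) k : z ^+ k = 1 -> z != 1 -> \sum_(i < k) z ^+ i = 0.
Proof.
move=> zk z1; have := subrX1 z k; rewrite zk subrr => /esym/eqP.
by rewrite mulf_eq0 subr_eq0 (negPf z1) => /eqP.
Qed.

Local Close Scope ring_scope.

Lemma catU (s1 s2 : seq nat) : uniq s1 -> uniq s2 ->
  (forall x, x \in s1 -> x \in s2 -> False) -> uniq (s1 ++ s2).
Proof.
move=> u1 u2 d; rewrite cat_uniq u1 u2 andbT /=; apply/hasPn => x x2; apply/negP => x1.
exact: d x1 x2.
Qed.

Lemma perm_map_self (s : seq nat) f : uniq s -> (forall x, x \in s -> f x \in s) ->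
  {in s &, injective f} -> perm_eq (map f s) s.
Proof.
move=> us sf fi; have um : uniq (map f s) by rewrite map_inj_in_uniq.
have sub : {subset map f s <= s} by move=> y /mapP [x xs ->]; exact: sf.
have [_ eq] := uniq_min_size um sub (eq_leq (esym (size_map f s))).
by apply: uniq_perm.
Qed.

Definition Uset n := [seq x <- iota 0 n | coprime x n].

Lemma memU n x : (x \in Uset n) = (x < n) && coprime x n.
Proof. by rewrite mem_filter mem_iota add0n andbC. Qed.

Lemma size_U n1 n2 g u : hyp n1 n2 g u -> size (Uset (n1 * n2)) = 6 * wh_e n1 n2.
Proof.
move=> H; rewrite size_filter.
have -> : count (fun x => coprime x (n1 * n2)) (iota 0 (n1 * n2)) = totient (n1 * n2).
  rewrite totient_count_coprime /index_iota subn0 -sum1_count big_mkcond /=.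
  by apply: eq_bigr => i _; rewrite coprime_sym; case: coprime.
rewrite totient_coprime ?(cop12 H) // !totient_prime ?(pn1 H) ?(pn2 H) //.
by rewrite /wh_e [RHS]mulnC divnK // dvdn_mulr // (d6_1 H).
Qed.

Definition fmul n Q x := (x * Q) %% n.

Lemma fmul_inj n Q : coprime Q n -> {in [pred x | x < n] &, injective (fmul n Q)}.
Proof.
move=> cQ x y; rewrite !inE /fmul => xn yn E.
by have := cancel_mod cQ E; rewrite !modn_small.
Qed.

Lemma Dclass_disj n1 n2 g u i j x : hyp n1 n2 g u -> i != j %[mod 6] ->
  x \in whD n1 n2 g u i -> x \in whD n1 n2 g u j -> False.
Proof.
move=> H ne /(D_cls H) [s Es] /(D_cls H) [t Et].
by move/eqP: ne; apply; apply: (cls (s:=s) (t:=t) H); rewrite -Es -Et.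
Qed.

Definition Eset n1 n2 g u a :=
  whD n1 n2 g u a ++ whD n1 n2 g u a.+1 ++ whD n1 n2 g u a.+2.

Lemma memE n1 n2 g u a x : (x \in Eset n1 n2 g u a) =
  [|| x \in whD n1 n2 g u a, x \in whD n1 n2 g u a.+1 | x \in whD n1 n2 g u a.+2].
Proof. by rewrite /Eset !mem_cat. Qed.

Lemma E_cls n1 n2 g u a x : hyp n1 n2 g u -> x \in Eset n1 n2 g u a ->
  exists i s, [/\ a <= i <= a.+2 & x = g ^ s * u ^ i %[mod n1 * n2]].
Proof.
move=> H; rewrite memE => /or3P [] /(D_cls H) [s E]; [exists a | exists a.+1 | exists a.+2];
  by exists s; split => //; apply/andP; split; lia.
Qed.

Lemma E_uniq n1 n2 g u a : hyp n1 n2 g u -> a < 3 -> uniq (Eset n1 n2 g u a).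
Proof.
move=> H a3; have dj := Dclass_disj H; have du := D_uniq _ H.
rewrite /Eset catU ?du //.
- by apply: catU; rewrite ?du // => x; apply: dj; case: a a3 => [|[|[|]]].
move=> x x1; rewrite mem_cat => /orP [] x2; apply: dj x1 x2; case: a a3 => [|[|[|]]] //.
Qed.

Lemma E_unit n1 n2 g u a x : hyp n1 n2 g u -> x \in Eset n1 n2 g u a -> x \in Uset (n1 * n2).
Proof.
move=> H; rewrite memE memU => /or3P [] /(D_unit H) [-> ->] //.
Qed.

Lemma size_E n1 n2 g u a : size (Eset n1 n2 g u a) = 3 * wh_e n1 n2.
Proof. by rewrite /Eset !size_cat !size_map size_iota; lia. Qed.

Local Close Scope ring_scope.

Definition Aset n1 n2 g u a := whN1 n1 n2 ++ Eset n1 n2 g u a.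

Lemma A_uniq n1 n2 g u a : hyp n1 n2 g u -> a < 3 -> uniq (Aset n1 n2 g u a).
Proof.
move=> H a3; rewrite /Aset catU ?(E_uniq H) ?(N1_uniq n2 (pn1 H)) //.
move=> x /(N1_notcop (pn1 H)) nc /(E_unit H); rewrite memU => /andP [_ c].
by rewrite c in nc.
Qed.

Lemma A_mem n1 n2 g u a x : hyp n1 n2 g u -> (x \in Aset n1 n2 g u a) =
  (x < n1 * n2) && [|| x \in whN1 n1 n2, x \in whD n1 n2 g u a,
                       x \in whD n1 n2 g u a.+1 | x \in whD n1 n2 g u a.+2].
Proof.
move=> H; rewrite /Aset mem_cat -memE.
case N: (x \in whN1 n1 n2).
  by move: N; rewrite memN1 ?(pn1 H) // => /and3P [_ -> _].
case E: (x \in Eset n1 n2 g u a); rewrite /= ?andbF // andbT.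
by move/(E_unit H): E; rewrite memU => /andP [-> _].
Qed.

Lemma cop_of_g n1 n2 g u Q w : hyp n1 n2 g u -> Q = g ^ w %[mod n1 * n2] ->
  coprime Q (n1 * n2).
Proof.
by move=> H E; rewrite -coprime_modl E coprime_modl coprimeXl ?(g_cop H).
Qed.

Lemma A_inv n1 n2 g u a Q w : hyp n1 n2 g u -> a < 3 -> Q = g ^ w %[mod n1 * n2] ->
  perm_eq (map (fmul (n1 * n2) Q) (Aset n1 n2 g u a)) (Aset n1 n2 g u a).
Proof.
move=> H a3 EQ; have cQ := cop_of_g H EQ.
apply: perm_map_self; first exact: A_uniq.
  move=> x; rewrite /Aset mem_cat => /orP [xN|].
    by rewrite mem_cat /fmul (N1_mul H xN cQ).
  move=> xE; rewrite mem_cat; apply/orP; right; move: xE.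
  by rewrite !memE => /or3P [] xD; rewrite /fmul (D_mul H xD EQ) ?orbT.
move=> x y xA yA; apply: (fmul_inj cQ); rewrite inE.
  by move: xA; rewrite (A_mem _ _ H) => /andP [].
by move: yA; rewrite (A_mem _ _ H) => /andP [].
Qed.

Lemma cls_check a i j k : a < 3 -> a <= i <= a.+2 -> a <= j <= a.+2 -> k %% 6 = 3 ->
  i = j + k %[mod 6] -> False.
Proof.
move=> a3 hi hj hk; rewrite -modnDmr hk.
have : i < 5 by lia. have : j < 5 by lia.
move: i j hi hj; case: a a3 => [|[|[|]]] // _ [|[|[|[|[|]]]]] [|[|[|[|[|]]]]] //.
Qed.

Lemma EU_perm n1 n2 g u a r w k : hyp n1 n2 g u -> a < 3 ->
  r = g ^ w * u ^ k %[mod n1 * n2] -> k %% 6 = 3 ->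
  perm_eq (Eset n1 n2 g u a ++ map (fmul (n1 * n2) r) (Eset n1 n2 g u a)) (Uset (n1 * n2)).
Proof.
move=> H a3 Er hk.
have cr : coprime r (n1 * n2).
  rewrite -coprime_modl Er coprime_modl coprimeMl coprimeXl ?(g_cop H) //.
  exact/coprimeXl/(u_cop H).
have n0 : 0 < n1 * n2 by have := n_gt1 H; lia.
have uE := E_uniq H a3.
have uM : uniq (map (fmul (n1 * n2) r) (Eset n1 n2 g u a)).
  rewrite map_inj_in_uniq // => x y xE yE; apply: (fmul_inj cr); rewrite inE.
    by move: (E_unit H xE); rewrite memU => /andP [].
  by move: (E_unit H yE); rewrite memU => /andP [].
have uC : uniq (Eset n1 n2 g u a ++ map (fmul (n1 * n2) r) (Eset n1 n2 g u a)).
  apply: catU => // y yE /mapP [x xE Eyx]; subst y.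
  have [i [s [hi Ey]]] := E_cls H yE.
  have [j [t [hj Ex]]] := E_cls H xE.
  apply: (cls_check a3 hi hj hk).
  apply: (cls (s := s) (t := t + w) H).
  rewrite -Ey /fmul modn_mod -modnMml Ex modnMml -modnMmr Er modnMmr.
  by rewrite !expnD mulnACA.
have sub : {subset Eset n1 n2 g u a ++ map (fmul (n1 * n2) r) (Eset n1 n2 g u a) <= Uset (n1 * n2)}.
  move=> y; rewrite mem_cat => /orP [/(E_unit H) //|/mapP [x xE ->]].
  rewrite memU /fmul ltn_mod n0 coprime_modl coprimeMl cr andbT.
  by move: (E_unit H xE); rewrite memU => /andP [].
have le : size (Uset (n1 * n2)) <= size (Eset n1 n2 g u a ++ map (fmul (n1 * n2) r) (Eset n1 n2 g u a)).
  by rewrite (size_U H) size_cat size_map size_E; lia.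
have [_ eq] := uniq_min_size uC sub le.
by apply: uniq_perm; rewrite // filter_uniq ?iota_uniq.
Qed.

Lemma reduce6 n1 n2 g u r w k : hyp n1 n2 g u ->
  r = g ^ w * u ^ k %[mod n1 * n2] -> k %% 6 = 0 -> exists w', r = g ^ w' %[mod n1 * n2].
Proof.
move=> H Er hk; have [c Ec] := u6 H.
have ek : k = 6 * (k %/ 6) by rewrite {1}(divn_eq k 6) hk addn0 mulnC.
exists (w + c * (k %/ 6)); rewrite Er expnD; apply: modMl.
by rewrite {1}ek expnM (modXeq _ Ec) -expnM.
Qed.

Lemma NU_mem n1 n2 g u x : hyp n1 n2 g u ->
  (x \in whN1 n1 n2 ++ Uset (n1 * n2)) = (x < n1 * n2) && ~~ (n2 %| x).
Proof.
move=> H; have p1 := pn1 H; have p2 := pn2 H.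
have c1 : coprime x n1 = ~~ (n1 %| x) by rewrite coprime_sym prime_coprime.
have c2 : coprime x n2 = ~~ (n2 %| x) by rewrite coprime_sym prime_coprime.
rewrite mem_cat memN1 // memU coprimeMr c1 c2.
case xn: (x < n1 * n2); rewrite ?andbF //=.
case d2: (n2 %| x); rewrite /= ?andbT ?andbF ?orbF.
  apply/negP => /andP [x0 d1].
  have : n1 * n2 %| x by rewrite Gauss_dvd ?(cop12 H) ?d1.
  by move/dvdn_leq => /(_ x0); rewrite leqNgt xn.
case d1: (n1 %| x); rewrite ?orbT //= andbT.
by rewrite orbF lt0n; apply/negP => /eqP x0; rewrite x0 dvdn0 in d2.
Qed.

Lemma N2_mem n1 n2 x : prime n1 -> prime n2 ->
  (x \in [seq k * n2 | k <- iota 0 n1]) = (x < n1 * n2) && (n2 %| x).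
Proof.
move=> p1 p2; have n2p := prime_gt0 p2.
apply/mapP/andP => [[k]|[xn /dvdnP [k ek]]].
  rewrite mem_iota add0n => /andP [_ k2] ->; split; rewrite ?dvdn_mull //.
  by rewrite ltn_pmul2r.
by exists k => //; rewrite mem_iota add0n /=; move: xn; rewrite ek ltn_pmul2r.
Qed.

Lemma N2_uniq n1 n2 : prime n2 -> uniq [seq k * n2 | k <- iota 0 n1].
Proof.
move=> p2; rewrite map_inj_uniq ?iota_uniq // => a b /eqP.
by rewrite eqn_pmul2r ?prime_gt0 // => /eqP.
Qed.

Lemma N1_inv n1 n2 g u Q : hyp n1 n2 g u -> coprime Q (n1 * n2) ->
  perm_eq (map (fmul (n1 * n2) Q) (whN1 n1 n2)) (whN1 n1 n2).
Proof.
move=> H cQ; apply: perm_map_self; first exact: N1_uniq (pn1 H).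
  by move=> x xN; rewrite /fmul (N1_mul H xN cQ).
move=> x y xA yA; apply: (fmul_inj cQ); rewrite inE.
  by move: xA; rewrite memN1 ?(pn1 H) // => /and3P [].
by move: yA; rewrite memN1 ?(pn1 H) // => /and3P [].
Qed.

Local Open Scope ring_scope.

Lemma beta_facts (F : finFieldType) (alpha : F) n1 n2 q m :
  (1 < n1)%N -> (1 < n2)%N -> is_ord_mod q (n1 * n2) m -> #|F| = (q ^ m)%N ->
  ((q ^ m).-1).-primitive_root alpha ->
  [/\ (alpha ^+ ((q ^ m).-1 %/ (n1 * n2))) ^+ (n1 * n2) = 1,
      (alpha ^+ ((q ^ m).-1 %/ (n1 * n2))) ^+ n1 != 1 &
      (alpha ^+ ((q ^ m).-1 %/ (n1 * n2))) ^+ n2 != 1].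
Proof.
move=> h1 h2 [_ [qm _]] cF pr.
have gt1 : (1 < q ^ m)%N by rewrite -cF finNzRing_gt1.
have n1' : (1 < n1 * n2)%N by nia.
have dn : (n1 * n2 %| (q ^ m).-1)%N.
  have : (q ^ m == 1 %[mod n1 * n2])%N by apply/eqP.
  by rewrite eqn_mod_dvd ?subn1 //; lia.
set d := ((q ^ m).-1 %/ (n1 * n2))%N.
have eN : (q ^ m).-1 = (d * (n1 * n2))%N by rewrite /d divnK.
have d0 : (0 < d)%N by move: eN; case: (d) => //; lia.
split.
- by rewrite -exprM -eN prim_expr_order.
- rewrite -exprM -(prim_order_dvd pr) eN; apply/negP => /dvdn_leq.
  have : (0 < d * n1)%N by rewrite muln_gt0 d0; lia.
  move=> h /(_ h); nia.
- rewrite -exprM -(prim_order_dvd pr) eN; apply/negP => /dvdn_leq.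
  have : (0 < d * n2)%N by rewrite muln_gt0 d0; lia.
  move=> h /(_ h); nia.
Qed.

Lemma sumN1 (F : fieldType) (b : F) n1 n2 : (0 < n2)%N -> (b ^+ n1) ^+ n2 = 1 ->
  b ^+ n1 != 1 -> \sum_(x <- whN1 n1 n2) b ^+ x = -1.
Proof.
move=> n2p z1 zn; have := geo z1 zn.
rewrite -(big_mkord xpredT (fun i => (b ^+ n1) ^+ i)) /index_iota subn0.
rewrite -(prednK n2p) /= big_cons expr0 /whN1 big_map.
under [in X in _ -> X = _]eq_bigr do rewrite mulnC exprM.
by move/eqP; rewrite addrC addr_eq0 => /eqP.
Qed.

Lemma sum_nondiv (F : fieldType) (b : F) n1 n2 : prime n1 -> prime n2 ->
  b ^+ (n1 * n2) = 1 -> b ^+ n1 != 1 -> b ^+ n2 != 1 ->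
  \sum_(i < n1 * n2 | ~~ (n2 %| i)%N) b ^+ i = 0.
Proof.
move=> p1 p2 bn b1 b2.
have b0 : b != 1 by apply: contraNneq b1 => ->; rewrite expr1n.
have := geo bn b0; rewrite (bigID (fun i : 'I_(n1 * n2) => (n2 %| i)%N)) /=.
have -> : \sum_(i < n1 * n2 | (n2 %| i)%N) b ^+ i = 0.
  have := evsum_seq b (P := fun i => (n2 %| i)%N) (N2_uniq n1 p2) (fun x => N2_mem x p1 p2).
  rewrite /evsum => ->; rewrite big_map.
  under eq_bigr do rewrite mulnC exprM.
  have h : (b ^+ n2) ^+ n1 = 1 by rewrite -exprM mulnC.
  have := @geo _ (b ^+ n2) n1 h b2.
  by rewrite -(big_mkord xpredT (fun i => (b ^+ n2) ^+ i)) /index_iota subn0.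
by rewrite add0r.
Qed.

Local Open Scope ring_scope.

Lemma SA_II (F : fieldType) (b : F) n1 n2 g u a Q w p j :
  hyp n1 n2 g u -> (a < 3)%N -> b ^+ (n1 * n2) = 1 -> p \in [pchar F] ->
  Q = (p ^ j)%N -> Q = g ^ w %[mod n1 * n2] ->
  (\sum_(x <- Aset n1 n2 g u a) b ^+ x) ^+ Q = \sum_(x <- Aset n1 n2 g u a) b ^+ x.
Proof.
move=> H a3 bn cp EQ Eg; have Eg' := Eg; rewrite EQ in Eg' *.
rewrite frob // (modsum _ _ bn); apply: perm_big; exact: A_inv H a3 Eg'.
Qed.

Lemma NU_uniq n1 n2 g u : hyp n1 n2 g u -> uniq (whN1 n1 n2 ++ Uset (n1 * n2)).
Proof.
move=> H; rewrite catU ?(N1_uniq n2 (pn1 H)) ?filter_uniq ?iota_uniq //.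
move=> x /(N1_notcop (pn1 H)) nc; rewrite memU => /andP [_ c].
by rewrite c in nc.
Qed.

Lemma SA_I (F : fieldType) (b : F) n1 n2 g u a r w k p j :
  hyp n1 n2 g u -> (a < 3)%N -> b ^+ (n1 * n2) = 1 -> b ^+ n1 != 1 -> b ^+ n2 != 1 ->
  p \in [pchar F] -> r = (p ^ j)%N -> r = g ^ w * u ^ k %[mod n1 * n2] -> (k %% 6 = 3)%N ->
  \sum_(x <- Aset n1 n2 g u a) b ^+ x + (\sum_(x <- Aset n1 n2 g u a) b ^+ x) ^+ r = -1.
Proof.
move=> H a3 bn b1 b2 cp Er Eg hk.
have cr : coprime r (n1 * n2).
  rewrite -coprime_modl Eg coprime_modl coprimeMl coprimeXl ?(g_cop H) //.
  exact/coprimeXl/(u_cop H).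
have hU : \sum_(x <- Eset n1 n2 g u a ++ map (fmul (n1 * n2) r) (Eset n1 n2 g u a)) b ^+ x = \sum_(x <- Uset (n1 * n2)) b ^+ x.
  exact: perm_big (EU_perm H a3 Eg hk).
rewrite big_cat /= in hU.
have hNU : \sum_(x <- whN1 n1 n2) b ^+ x + \sum_(x <- Uset (n1 * n2)) b ^+ x = 0.
  rewrite -big_cat /= -(evsum_seq b (NU_uniq H) (fun x => NU_mem x H)).
  exact: sum_nondiv (pn1 H) (pn2 H) bn b1 b2.
have hN : \sum_(x <- whN1 n1 n2) b ^+ x = -1.
  apply: sumN1; first exact: prime_gt0 (pn2 H).
    by rewrite -exprM.
  exact: b1.
rewrite [in X in _ + X]Er frob // (modsum _ _ bn) -Er.
have -> : \sum_(x <- Aset n1 n2 g u a) b ^+ x =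
   \sum_(x <- whN1 n1 n2) b ^+ x + \sum_(x <- Eset n1 n2 g u a) b ^+ x.
  by rewrite /Aset big_cat.
have -> : \sum_(x <- map (fun x => (x * r) %% (n1 * n2))%N (Aset n1 n2 g u a)) b ^+ x =
   \sum_(x <- whN1 n1 n2) b ^+ x + \sum_(x <- map (fmul (n1 * n2) r) (Eset n1 n2 g u a)) b ^+ x.
  by rewrite /Aset map_cat big_cat (perm_big _ (N1_inv H cr)).
set X1 := \sum_(x <- whN1 n1 n2) b ^+ x.
set E1 := \sum_(x <- Eset n1 n2 g u a) b ^+ x.
set E2 := \sum_(x <- map _ (Eset n1 n2 g u a)) b ^+ x.
have -> : X1 + E1 + (X1 + E2) = X1 + (X1 + (E1 + E2)) by ring.
by rewrite /E1 /E2 hU hNU addr0.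
Qed.

Local Open Scope ring_scope.

Lemma finish (F : fieldType) (S : F) r : (0 < r)%N -> S + S ^+ r = -1 -> S != -1 /\ S != 0.
Proof.
move=> r0 E; split; apply/negP => /eqP ES; move: E; rewrite ES.
  move/eqP; rewrite -subr_eq0 addrAC subrr add0r => /eqP /eqP.
  by rewrite expf_eq0 oppr_eq0 oner_eq0 andbF.
case: r r0 => [|r] //= _; rewrite expr0n add0r /=.
by move/eqP; rewrite eq_sym oppr_eq0 oner_eq0.
Qed.

Unset Implicit Arguments.

Theorem lemma5 (n1 n2 g u q m : nat) (F : finFieldType) (alpha : F) :
  prime n1 -> prime n2 -> odd n1 -> odd n2 -> n1 != n2 ->
  gcdn n1.-1 n2.-1 = 6%N ->
  is_primroot g n1 -> is_primroot g n2 ->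
  u = g %[mod n1] -> u = 1 %[mod n2] ->
  (exists p k, [/\ prime p, (0 < k)%N & q = (p ^ k)%N]) ->
  coprime q (n1 * n2) ->
  is_ord_mod q (n1 * n2) m ->
  #|F| = (q ^ m)%N ->
  ((q ^ m).-1).-primitive_root alpha ->
  let n := (n1 * n2)%N in
  let beta := alpha ^+ ((q ^ m).-1 %/ n) in
  let D := whD n1 n2 g u in
  let N1 := whN1 n1 n2 in
  let S := evsum beta n (fun i => [|| i \in N1, i \in D 0%N, i \in D 1%N | i \in D 2%N]) in
  let T := evsum beta n (fun i => [|| i \in N1, i \in D 1%N, i \in D 2%N | i \in D 3%N]) in
  let M := evsum beta n (fun i => [|| i \in N1, i \in D 2%N, i \in D 3%N | i \in D 4%N]) in
  [/\ (((q %% n)%N \in D 1%N \/ (q %% n)%N \in D 3%N \/ (q %% n)%N \in D 5%N) ->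
        [/\ S != -1 /\ S != 0, T != -1 /\ T != 0 & M != -1 /\ M != 0]),
      ((q %% n)%N \in D 0%N ->
        [/\ S ^+ q = S, T ^+ q = T & M ^+ q = M])
    & (((q %% n)%N \in D 2%N \/ (q %% n)%N \in D 4%N) ->
        [/\ S ^+ (q ^ 3) = S, T ^+ (q ^ 3) = T & M ^+ (q ^ 3) = M])].
Proof.
move=> p1 p2 _ _ ne g6 pr1 pr2 u1 u2 [p [j [pp j0 qE]]] cq om cardF prim.
move=> n beta D N1 S T M.
have H : hyp n1 n2 g u := Hyp p1 p2 ne g6 pr1 pr2 u1 u2.
have [bn b1 b2] := beta_facts (prime_gt1 p1) (prime_gt1 p2) om cardF prim.
have cp : p \in [pchar F].
  by apply: (card_finPcharP _ pp); rewrite cardF qE -expnM.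
have eA : forall a, (a < 3)%N -> evsum beta n (fun i => [|| i \in N1, i \in D a, i \in D a.+1 | i \in D a.+2])
    = \sum_(x <- Aset n1 n2 g u a) beta ^+ x.
  by move=> a a3; apply: evsum_seq; [exact: A_uniq | move=> x; rewrite (A_mem _ _ H)].
have eS : S = \sum_(x <- Aset n1 n2 g u 0) beta ^+ x by exact: eA.
have eT : T = \sum_(x <- Aset n1 n2 g u 1) beta ^+ x by exact: eA.
have eM : M = \sum_(x <- Aset n1 n2 g u 2) beta ^+ x by exact: eA.
have qcls : forall k, (q %% n)%N \in D k -> exists s, q = g ^ s * u ^ k %[mod n].
  by move=> k /(D_cls H) [s E]; exists s; rewrite -E modn_mod.
have q3cls : forall k s, q = g ^ s * u ^ k %[mod n] ->
    (q ^ 3)%N = g ^ (s * 3) * u ^ (k * 3) %[mod n].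
  by move=> k s E; rewrite (modXeq 3 E) expnMn !expnM.
have q3E : (q ^ 3)%N = (p ^ (j * 3))%N by rewrite qE expnM.
split.
- move=> hq.
  have [k [s [hk Eq]]] : exists k s, [/\ (k * 3 %% 6 = 3)%N & q = g ^ s * u ^ k %[mod n]].
    case: hq => [/qcls [s E]|[/qcls [s E]|/qcls [s E]]];
      by [exists 1%N, s | exists 3%N, s | exists 5%N, s].
  have E3 := q3cls _ _ Eq.
  have q30 : (0 < q ^ 3)%N by rewrite qE -expnM expn_gt0 prime_gt0.
  by split; [rewrite eS | rewrite eT | rewrite eM]; apply: (finish q30);
    apply: (SA_I H _ bn b1 b2 cp q3E E3 hk).
- move=> /qcls [s Eq]; rewrite expn0 muln1 in Eq.
  by split; [rewrite eS | rewrite eT | rewrite eM]; apply: (SA_II H _ bn cp qE Eq).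
- move=> hq.
  have [k [s [hk Eq]]] : exists k s, [/\ (k * 3 %% 6 = 0)%N & q = g ^ s * u ^ k %[mod n]].
    case: hq => [/qcls [s E]|/qcls [s E]]; by [exists 2%N, s | exists 4%N, s].
  have [w Ew] := reduce6 H (q3cls _ _ Eq) hk.
  by split; [rewrite eS | rewrite eT | rewrite eM]; apply: (SA_II H _ bn cp q3E Ew).
Qed.
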